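(* Let $\Gamma\to\operatorname{U}(V)$ be a unitary representation of a finite group $\Gamma$ on a finite-dimensional hermitean vector space $V$. Then any $X\in\operatorname{Der}(\mathcal C^\infty(V))$ such that $X|_{\mathcal C^\infty(V)^\Gamma}=0$ vanishes.
   Context: $\mathcal C^\infty(V)$ is the algebra of smooth real-valued functions on $V$ viewed as a real vector space, $\mathcal C^\infty(V)^\Gamma$ its subalgebra of $\Gamma$-invariant functions, and $\operatorname{Der}(\mathcal C^\infty(V))$ the module of $\mathbb R$-linear derivations (smooth vector fields). *)

(* Defs.v *)
From mathcomp Require Import all_boot all_order all_algebra all_fingroup.
From mathcomp Require Import all_classical all_reals all_analysis.
From mathcomp.real_closed Require Export complex.
Import GRing.Theory Num.Theory.
Set Implicit Arguments. Unset Strict Implicit. Unset Printing Implicit Defensive.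
Local Open Scope ring_scope.

(* Realification: the complex space C^n = 'cV[R[i]]_n seen as the real vector
   space R^(2n) = 'cV[R]_(n+n) (real parts, then imaginary parts). *)
Definition realify (R : realType) (n : nat) (x : 'cV[R]_(n + n)) : 'cV[R[i]]_n :=
  \col_j Complex (x (lshift n j) 0) (x (rshift n j) 0).

Fixpoint Ck (R : realType) (V : normedModType R) (k : nat) (f : V -> R^o) : Prop :=
  match k with
  | 0 => continuous f
  | k'.+1 => (forall x, differentiable f x) /\ forall v : V, Ck k' (fun x => 'D_v f x)
  end.

Definition smooth (R : realType) (V : normedModType R) (f : V -> R^o) : Prop :=
  forall k, Ck k f.

Definition smoothC (R : realType) (n : nat) (f : 'cV[R[i]]_n -> R) : Prop :=
  smooth (f \o @realify R n).

(* X is an R-linear derivation of the algebra C^oo(C^n)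
   (represented on the carrier of all functions, acting on the smooth ones). *)
Definition is_derivation (R : realType) (n : nat)
    (X : ('cV[R[i]]_n -> R) -> ('cV[R[i]]_n -> R)) : Prop :=
  [/\ forall f, smoothC f -> smoothC (X f),
      forall (a : R) f g, smoothC f -> smoothC g ->
        X (fun x => a * f x + g x) = (fun x => a * X f x + X g x)
    & forall f g, smoothC f -> smoothC g ->
        X (fun x => f x * g x) = (fun x => f x * X g x + X f x * g x)].

Definition unitary_mx (R : realType) (n : nat) (A : 'M[R[i]]_n) : Prop :=
  A *m (map_mx (@conjc R) A)^T = 1%:M.

Definition unitary_rep (R : realType) (n : nat) (gT : finGroupType)
    (rho : gT -> 'M[R[i]]_n) : Prop :=
  (forall g h : gT, rho (g * h)%g = rho g *m rho h) /\ forall g, unitary_mx (rho g).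

Definition gamma_invariant (R : realType) (n : nat) (gT : finGroupType)
    (rho : gT -> 'M[R[i]]_n) (f : 'cV[R[i]]_n -> R) : Prop :=
  forall (g : gT) x, f (rho g *m x) = f x.

(* Main.v *)
Require Import Defs.
From mathcomp Require Import all_boot all_order all_algebra all_fingroup.
From mathcomp Require Import all_classical all_reals all_analysis.
From mathcomp.real_closed Require Import complex.
From mathcomp Require Import ring lra.
Import Order.TTheory GRing.Theory Num.Theory.
Local Open Scope ring_scope.
Section CkLemmas.
Context {R : realType} {V : normedModType R}.

Lemma Ck_cont k (f : V -> R^o) : Ck k f -> continuous f.
Proof.
case: k => [//|k] /= [df _] x; exact: differentiable_continuous.
Qed.

Lemma Ck_weak k (f : V -> R^o) : Ck k.+1 f -> Ck k f.
Proof.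
elim: k f => [|k IH] f /=.
  by case=> df _ x; exact: differentiable_continuous.
by case=> df Hv; split=> // v; apply: IH; exact: Hv.
Qed.

Lemma Ck_cst k (c : R^o) : Ck k (fun _ : V => c).
Proof.
elim: k c => [|k IH] c /=; first by move=> x; exact: cst_continuous.
split=> [x|v]; first exact: differentiable_cst.
have -> : ('D_v (fun _ : V => c)) = (fun _ => 0 : R^o).
  by apply/funext => x; exact: derive_cst.
exact: IH.
Qed.

Lemma Ck_add k (f g : V -> R^o) : Ck k f -> Ck k g -> Ck k (fun x => f x + g x).
Proof.
elim: k f g => [|k IH] f g /=.
  by move=> cf cg x; exact: (@continuousD _ _ _ f g x (cf x) (cg x)).
case=> df Df [dg Dg]; split=> [x|v]; first exact: differentiableD.
have -> : 'D_v (fun x => f x + g x) = (fun x => 'D_v f x + 'D_v g x).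
  apply/funext => x; apply: deriveD; exact: diff_derivable.
exact: IH.
Qed.

Lemma Ck_mul k (f g : V -> R^o) : Ck k f -> Ck k g -> Ck k (fun x => f x * g x).
Proof.
elim: k f g => [|k IH] f g /=.
  by move=> cf cg x; exact: (@continuousM _ _ f g x (cf x) (cg x)).
move=> Hf Hg; move: (Hf) (Hg) => [df Df] [dg Dg]; split=> [x|v].
  exact: differentiableM.
have -> : 'D_v (fun x => f x * g x) = (fun x => f x * 'D_v g x + g x * 'D_v f x).
  apply/funext => x; apply: deriveM; exact: diff_derivable.
apply: Ck_add; apply: IH => //; exact: Ck_weak.
Qed.

Lemma Ck_lin k (l : {linear V -> R^o}) : continuous l -> Ck k l.
Proof.
move=> cl; case: k => [//|k] /=; split=> [x|v]; first exact: linear_differentiable.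
have -> : 'D_v l = (fun _ => l v).
  apply/funext => x; rewrite deriveE ?diff_lin //; exact: linear_differentiable.
exact: Ck_cst.
Qed.

Lemma Ck_comp k (L : {linear V -> V}) (f : V -> R^o) :
  continuous L -> Ck k f -> Ck k (f \o L).
Proof.
move=> cL; elim: k f => [|k IH] f /=.
  by move=> cf x; apply: continuous_comp; [exact: cL | exact: cf].
case=> df Df; split=> [x|v].
  apply: differentiable_comp => //; exact: linear_differentiable.
have -> : 'D_v (f \o L) = ('D_(L v) f) \o L.
  apply/funext => x; rewrite /= deriveE; last first.
    apply: differentiable_comp => //; exact: linear_differentiable.
  rewrite diff_comp //; last exact: linear_differentiable.
  by rewrite /= diff_lin // deriveE.
exact: IH.
Qed.

End CkLemmas.
Section Realify.
Context {R : realType} {n : nat}.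
Local Notation W := 'cV[R]_(n + n).
Local Notation CV := 'cV[R[i]]_n.

Definition unrealify (x : CV) : W :=
  col_mx (\col_j complex.Re (x j 0)) (\col_j complex.Im (x j 0)).

Lemma realifyK (x : CV) : realify (unrealify x) = x.
Proof.
apply/matrixP => j k; rewrite !ord1 mxE col_mxEu col_mxEd !mxE.
by case: (x j 0).
Qed.

Lemma unrealifyK (w : W) : unrealify (realify w) = w.
Proof.
apply/matrixP => j k; rewrite !ord1 /unrealify.
rewrite -(splitK j); case: (fintype.split j) => j' /=.
  by rewrite col_mxEu !mxE.
by rewrite col_mxEd !mxE.
Qed.

Definition reM (A : 'M[R[i]]_n) : 'M[R]_(n + n) :=
  block_mx (map_mx (@complex.Re R) A) (- map_mx (@complex.Im R) A)
           (map_mx (@complex.Im R) A) (map_mx (@complex.Re R) A).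

Lemma sum_complex (I : Type) (r : seq I) (F G : I -> R) :
  \sum_(i <- r) Complex (F i) (G i) = Complex (\sum_(i <- r) F i) (\sum_(i <- r) G i).
Proof.
elim: r => [|i r IH]; first by rewrite !big_nil.
by rewrite !big_cons IH.
Qed.

Lemma reM_realify (A : 'M[R[i]]_n) (w : W) :
  realify (reM A *m w) = A *m realify w.
Proof.
rewrite -[w](vsubmxK) /reM mul_block_col.
apply/matrixP => j k; rewrite !ord1 mxE col_mxEu col_mxEd.
rewrite !mxE.
transitivity (\sum_j0 Complex (complex.Re (A j j0) * usubmx w j0 0 - complex.Im (A j j0) * dsubmx w j0 0)
                     (complex.Im (A j j0) * usubmx w j0 0 + complex.Re (A j j0) * dsubmx w j0 0)).
  rewrite sum_complex; congr Complex; rewrite -big_split; apply: eq_bigr => i _; rewrite !mxE /= ?mulNr //.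
apply: (@eq_bigr _ _ _ 'I_n) => i _; rewrite /realify [in RHS]mxE col_mxEu col_mxEd.
case: (A j i) => a b /=.
apply/eqP; rewrite eq_complex /=; apply/andP; split; apply/eqP; ring.
Qed.

End Realify.
Section SmoothLemmas.
Context {R : realType}.
Local Notation NV m := ('cV[R]_m : normedModType R).

Lemma mulmx_sum_colE m (M : 'M[R]_m) (w : 'cV[R]_m) :
  M *m w = \sum_k (w k 0) *: col k M.
Proof.
apply/matrixP => i j; rewrite !ord1 summxE !mxE; apply: eq_bigr => k _.
by rewrite !mxE mulrC.
Qed.

Lemma mulmx_continuous m (M : 'M[R]_m) :
  continuous (fun w : NV m => (M *m w : NV m)).
Proof.
have -> : (fun w : NV m => M *m w) = (fun w => \sum_(k <- index_enum 'I_m) (w k 0) *: col k M).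
  by apply/funext => w; rewrite mulmx_sum_colE.
elim: (index_enum _) => [|k r IH].
  have -> : (fun w : NV m => \sum_(k <- [::]) (w k 0) *: col k M) = (fun _ => 0).
    by apply/funext => w; rewrite big_nil.
  by move=> x; exact: cst_continuous.
have -> : (fun w : NV m => \sum_(k0 <- k :: r) (w k0 0) *: col k0 M) =
   (fun w => (w k 0) *: col k M + \sum_(k0 <- r) (w k0 0) *: col k0 M).
  by apply/funext => w; rewrite big_cons.
move=> x; apply: (@continuousD R (NV m) (NV m) (fun w : NV m => (w k 0) *: col k M) (fun w => \sum_(k0 <- r) (w k0 0) *: col k0 M) x); last exact: IH.
apply: continuousZr_tmp; exact: coord_continuous.
Qed.

Definition mulmxL {m} (M : 'M[R]_m) : {linear 'cV[R]_m -> 'cV[R]_m} := mulmx M.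

Lemma smooth_cst m (c : R) : smooth (fun _ : 'cV[R]_m => c : R^o).
Proof. move=> k; exact: Ck_cst. Qed.

Lemma smooth_add m (f g : 'cV[R]_m -> R^o) : smooth f -> smooth g -> smooth (fun x => f x + g x).
Proof. move=> sf sg k; exact: Ck_add. Qed.

Lemma smooth_mul m (f g : 'cV[R]_m -> R^o) : smooth f -> smooth g -> smooth (fun x => f x * g x).
Proof. move=> sf sg k; exact: Ck_mul. Qed.

Lemma smooth_comp m (M : 'M[R]_m) (f : 'cV[R]_m -> R^o) : smooth f -> smooth (fun x => f (M *m x)).
Proof.
move=> sf k; have H := (@Ck_comp R _ k (mulmxL M) f (@mulmx_continuous m M) (sf k)).
exact: H.
Qed.

Lemma smooth_coord m (k : 'I_m) : smooth (fun x : 'cV[R]_m => x k 0 : R^o).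
Proof.
have @l : {linear 'cV[R]_m -> R^o}.
  by exists (fun N : 'cV[R]_m => N k 0); do 2![eexists]; do ?[constructor];
     rewrite ?mxE// => ? *; rewrite ?mxE//; move=> ?; rewrite !mxE.
move=> j; rewrite (_ : (fun _ => _) = l) //; apply: Ck_lin.
exact: coord_continuous.
Qed.

Lemma smooth_sum m (I : Type) (r : seq I) (F : I -> 'cV[R]_m -> R^o) :
  (forall i, smooth (F i)) -> smooth (fun x => \sum_(i <- r) F i x).
Proof.
move=> sF; elim: r => [|i r IH].
  rewrite (_ : (fun x => _) = (fun _ => 0)); first exact: smooth_cst.
  by apply/funext => x; rewrite big_nil.
rewrite (_ : (fun x => _) = (fun x => F i x + \sum_(j <- r) F j x)).
  exact: smooth_add.
by apply/funext => x; rewrite big_cons.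
Qed.

End SmoothLemmas.
Section SmoothC.
Context {R : realType} {n : nat}.
Local Notation CV := 'cV[R[i]]_n.
Implicit Types (f g : CV -> R).

Lemma smoothC_cst (c : R) : smoothC (fun _ : CV => c).
Proof. exact: smooth_cst. Qed.

Lemma smoothC_add f g : smoothC f -> smoothC g -> smoothC (fun x => f x + g x).
Proof. exact: smooth_add. Qed.

Lemma smoothC_mul f g : smoothC f -> smoothC g -> smoothC (fun x => f x * g x).
Proof. exact: smooth_mul. Qed.

Lemma smoothC_sub f g : smoothC f -> smoothC g -> smoothC (fun x => f x - g x).
Proof.
move=> sf sg; rewrite (_ : (fun x => f x - g x) = (fun x => f x + (-1) * g x)).
  by apply: smoothC_add => //; apply: smoothC_mul => //; exact: smoothC_cst.
by apply/funext => x; rewrite mulN1r.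
Qed.

Lemma smoothC_sum (I : Type) (r : seq I) (F : I -> CV -> R) :
  (forall i, smoothC (F i)) -> smoothC (fun x => \sum_(i <- r) F i x).
Proof.
move=> sF; have H := @smooth_sum R (n + n) I r (fun i => F i \o @realify R n) sF.
exact: H.
Qed.

Lemma smoothC_pow f k : smoothC f -> smoothC (fun x => f x ^+ k).
Proof.
move=> sf; elim: k => [|k IH].
  by rewrite (_ : (fun x => _) = (fun _ => 1)); [exact: smoothC_cst | apply/funext => x; rewrite expr0].
rewrite (_ : (fun x => _) = (fun x => f x * f x ^+ k)); first exact: smoothC_mul.
by apply/funext => x; rewrite exprS.
Qed.

Lemma smoothC_compA (A : 'M[R[i]]_n) f : smoothC f -> smoothC (fun x => f (A *m x)).
Proof.
move=> sf; rewrite /smoothC.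
rewrite (_ : (fun x => f (A *m x)) \o @realify R n = (fun w => (f \o @realify R n) (reM A *m w))).
  exact: smooth_comp.
by apply/funext => w /=; rewrite reM_realify.
Qed.

Lemma smoothC_unr (F : 'cV[R]_(n + n) -> R^o) : smooth F -> smoothC (fun x => F (unrealify x)).
Proof.
move=> sF; rewrite /smoothC (_ : (fun x => F (unrealify x)) \o @realify R n = F) //.
by apply/funext => w /=; rewrite unrealifyK.
Qed.

Lemma smoothC_cont f : smoothC f ->
  continuous (fun w : ('cV[R]_(n + n) : normedModType R) => (f (@realify R n w) : R^o)).
Proof. move=> sf; have H := @Ck_cont _ _ 0%N _ (sf 0%N); exact: H. Qed.

End SmoothC.
Section Deriv.
Context {R : realType} {n : nat}.
Local Notation CV := 'cV[R[i]]_n.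
Variable X : (CV -> R) -> (CV -> R).
Hypothesis HX : is_derivation X.
Implicit Types (f g : CV -> R).

Lemma X_lin (a : R) f g : smoothC f -> smoothC g ->
  X (fun x => a * f x + g x) = (fun x => a * X f x + X g x).
Proof. by case: HX => _ H _; apply: H. Qed.

Lemma X_mul f g : smoothC f -> smoothC g ->
  X (fun x => f x * g x) = (fun x => f x * X g x + X f x * g x).
Proof. by case: HX => _ _ H; apply: H. Qed.

Lemma X_smooth f : smoothC f -> smoothC (X f).
Proof. by case: HX => H _ _; apply: H. Qed.

Lemma X_zero : X (fun _ => 0) = (fun _ => 0).
Proof.
have := @X_lin 1 (fun _ => 0) (fun _ => 0) (smoothC_cst 0) (smoothC_cst 0).
rewrite (_ : (fun _ : CV => 1 * 0 + 0) = (fun _ => 0)); last first.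
  by apply/funext => x; rewrite mul1r addr0.
move=> h; apply/funext => x; have := congr1 (fun F => F x) h => /= e.
lra.
Qed.

Lemma X_one : X (fun _ => 1) = (fun _ => 0).
Proof.
have := @X_mul (fun _ => 1) (fun _ => 1) (smoothC_cst 1) (smoothC_cst 1).
rewrite (_ : (fun _ : CV => 1 * 1) = (fun _ => 1)); last first.
  by apply/funext => x; rewrite mul1r.
move=> h; apply/funext => x; have := congr1 (fun F => F x) h => /= e.
lra.
Qed.

Lemma X_add f g : smoothC f -> smoothC g ->
  X (fun x => f x + g x) = (fun x => X f x + X g x).
Proof.
move=> sf sg; have := @X_lin 1 f g sf sg.
rewrite (_ : (fun x => 1 * f x + g x) = (fun x => f x + g x)); last first.
  by apply/funext => x; rewrite mul1r.
by move=> ->; apply/funext => x; rewrite mul1r.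
Qed.

Lemma X_scale (a : R) f : smoothC f -> X (fun x => a * f x) = (fun x => a * X f x).
Proof.
move=> sf; have := @X_lin a f (fun _ => 0) sf (smoothC_cst 0).
rewrite (_ : (fun x => a * f x + 0) = (fun x => a * f x)); last first.
  by apply/funext => x; rewrite addr0.
by move=> ->; rewrite X_zero; apply/funext => x; rewrite addr0.
Qed.

Lemma X_sum (I : Type) (r : seq I) (F : I -> CV -> R) :
  (forall i, smoothC (F i)) ->
  X (fun x => \sum_(i <- r) F i x) = (fun x => \sum_(i <- r) X (F i) x).
Proof.
move=> sF; elim: r => [|i r IH].
  rewrite (_ : (fun x => _) = (fun _ => 0)); last by apply/funext => x; rewrite big_nil.
  by rewrite X_zero; apply/funext => x; rewrite big_nil.
rewrite (_ : (fun x => _) = (fun x => F i x + \sum_(j <- r) F j x)); last first.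
  by apply/funext => x; rewrite big_cons.
rewrite X_add //; last exact: smoothC_sum.
by rewrite IH; apply/funext => x; rewrite big_cons.
Qed.

Lemma X_pow f k : smoothC f ->
  X (fun x => f x ^+ k) = (fun x => k%:R * f x ^+ k.-1 * X f x).
Proof.
move=> sf; elim: k => [|k IH].
  rewrite (_ : (fun x => _) = (fun _ => 1)); last by apply/funext => x; rewrite expr0.
  by rewrite X_one; apply/funext => x; rewrite mul0r mul0r.
rewrite (_ : (fun x => _) = (fun x => f x * f x ^+ k)); last first.
  by apply/funext => x; rewrite exprS.
rewrite X_mul //; last exact: smoothC_pow.
rewrite IH; apply/funext => x.
case: k {IH} => [|k] /=; first by rewrite !expr0; ring.
rewrite exprS -[k.+2]addn1 natrD -[k.+1]addn1 natrD; ring.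
Qed.

End Deriv.
Section LinAlg.
Context {R : realType} {m : nat}.
Local Notation V := 'cV[R]_m.

Definition dot (u v : V) : R := \sum_k u k 0 * v k 0.

Lemma dotDr (u v w : V) (t : R) : dot u (v + t *: w) = dot u v + t * dot u w.
Proof.
rewrite /dot mulr_sumr -big_split; apply: eq_bigr => k _; rewrite !mxE /=.
ring.
Qed.

Lemma dot_ge0 (u : V) : 0 <= dot u u.
Proof. by apply: sumr_ge0 => k _; rewrite -expr2 sqr_ge0. Qed.

Lemma dot_eq0 (u : V) : dot u u = 0 -> u = 0.
Proof.
move=> /eqP; rewrite psumr_eq0; last by move=> k _; rewrite -expr2 sqr_ge0.
move=> /allP H; apply/matrixP => i j; rewrite !ord1 mxE.
have := H i (mem_index_enum i); rewrite /= -expr2 sqrf_eq0 => /eqP //.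
Qed.

Lemma le_sum_mem (I : eqType) (r : seq I) (F : I -> R) (i : I) :
  (forall j, 0 <= F j) -> i \in r -> F i <= \sum_(j <- r) F j.
Proof.
move=> F0; elim: r => [//|a r IH]; rewrite inE big_cons => /orP [/eqP ->|ir].
  by rewrite lerDl sumr_ge0.
by rewrite (le_trans (IH ir)) // lerDr.
Qed.

Lemma avoid_line (L : seq 'M[R]_m) (a d : V) (e : R) : 0 < e ->
  (forall B, B \in L -> (B *m a != 0) || (B *m d != 0)) ->
  exists t, 0 < t < e /\ forall B, B \in L -> B *m (a + t *: d) != 0.
Proof.
move=> e0 HL.
pose beta (B : 'M[R]_m) : R :=
  if B *m d == 0 then 0 else `|dot (B *m d) (B *m a) / dot (B *m d) (B *m d)|^-1.
have beta0 B : 0 <= beta B by rewrite /beta; case: ifP => // _; rewrite invr_ge0.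
pose K := 1 + \sum_(B <- L) beta B + 2 / e.
have sum0 : 0 <= \sum_(B <- L) beta B by apply: sumr_ge0.
have he : 0 < 2 / e by rewrite divr_gt0.
have K0 : 0 < K by rewrite /K; lra.
exists K^-1; split.
  rewrite invr_gt0 K0 /=.
  rewrite -(invrK e) ltf_pV2 ?posrE ?invr_gt0 //.
  have ei : 0 < e^-1 by rewrite invr_gt0.
  have : e^-1 < 2 / e by lra.
  rewrite /K; lra.
move=> B BL; apply/negP => /eqP H0.
rewrite mulmxDr -scalemxAr in H0.
move: (HL B BL); have [Bd0|Bd0] := eqVneq (B *m d) 0.
  by rewrite Bd0 scaler0 addr0 in H0; rewrite H0 eqxx.
move=> _.
have dpos : 0 < dot (B *m d) (B *m d).
  by rewrite lt_def dot_ge0 andbT; apply/eqP => /dot_eq0 /eqP; rewrite (negbTE Bd0).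
have := congr1 (dot (B *m d)) H0; rewrite dotDr.
have -> : dot (B *m d) 0 = 0.
  by rewrite /dot big1 // => k _; rewrite [X in _ * X]mxE mulr0.
move=> E.
have Ht : K^-1 = - (dot (B *m d) (B *m a) / dot (B *m d) (B *m d)).
  apply: (@mulIf _ (dot (B *m d) (B *m d))); first by rewrite gt_eqF.
  rewrite mulNr divfK ?gt_eqF //; lra.
have hb : beta B = K.
  rewrite /beta (negbTE Bd0) -normrN -Ht ger0_norm ?invrK // invr_ge0 ltW //.
have := @le_sum_mem _ L beta B beta0 BL; rewrite hb /K; lra.
Qed.

Lemma generic_vec (L : seq 'M[R]_m) :
  (forall B, B \in L -> B != 0) -> exists u : V, forall B, B \in L -> B *m u != 0.
Proof.
elim: L => [|B0 L IH] HL; first by exists 0.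
have [u1 Hu1] : exists u : V, forall B, B \in L -> B *m u != 0.
  by apply: IH => B BL; apply: HL; rewrite inE BL orbT.
have [j Hj] : exists j : 'I_m, B0 *m (delta_mx j (0 : 'I_1) : 'cV[R]_m) != 0.
  apply/existsP; apply: contraT; rewrite negb_exists => /forallP H.
  have : B0 == 0.
    apply/eqP/matrixP => i k.
    have := H k; rewrite negbK -colE => /eqP /matrixP /(_ i 0).
    by rewrite !mxE.
  by rewrite (negbTE (HL B0 (mem_head _ _))).
have [t [_ Ht]] : exists t : R, 0 < t < 1 /\ forall B, B \in B0 :: L ->
    B *m (u1 + t *: (delta_mx j (0 : 'I_1) : 'cV[R]_m)) != 0.
  apply: avoid_line; first exact: ltr01.
  move=> B; rewrite inE => /orP [/eqP ->|BL]; first by rewrite Hj orbT.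
  by rewrite Hu1.
by exists (u1 + t *: delta_mx j 0).
Qed.

End LinAlg.
Lemma deriv_eval {R : realType} (p : {poly R}) (x : R) N : (size p <= N.+1)%N ->
  p^`().[x] = \sum_(i < N.+1) p`_i * (i%:R * x ^+ i.-1).
Proof.
move=> sp.
have sd : (size p^`() <= N)%N.
  rewrite /deriv; apply: (leq_trans (size_poly _ _)).
  by move: sp; case: (size p) => //= k; rewrite ltnS.
rewrite (horner_coef_wide x sd) big_ord_recl /= mul0r mulr0 add0r.
apply: eq_bigr => i _; rewrite coef_deriv /bump leq0n add1n add0n -mulr_natr; ring.
Qed.

Section Main.
Context {R : realType} {n : nat} {gT : finGroupType}.
Variable rho : gT -> 'M[R[i]]_n.
Variable X : ('cV[R[i]]_n -> R) -> ('cV[R[i]]_n -> R).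
Hypothesis Hrep : unitary_rep rho.
Hypothesis HX : is_derivation X.
Hypothesis Hinv : forall f, smoothC f -> gamma_invariant rho f -> X f = (fun _ => 0).
Local Notation CV := 'cV[R[i]]_n.
Local Notation MM := 'M[R[i]]_n.

Lemma rho_lcancel g (A A' : MM) : A *m rho g = A' *m rho g -> A = A'.
Proof.
move=> h; have u := (Hrep.2 g); rewrite /unitary_mx in u.
by rewrite -(mulmx1 A) -(mulmx1 A') -u !mulmxA h.
Qed.

Lemma rho1 : rho 1%g = 1%:M.
Proof.
have h := Hrep.1 1%g 1%g; rewrite mulg1 in h.
by apply: (@rho_lcancel 1%g); rewrite mul1mx -h.
Qed.

Definition Tl : seq MM := [seq A <- undup [seq rho g | g <- enum gT] | A != 1%:M].
Definition Sl : seq MM := 1%:M :: Tl.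

Lemma mem_rho_S g : rho g \in Sl.
Proof.
rewrite inE; case: eqP => //= /eqP ne.
by rewrite mem_filter ne mem_undup map_f // mem_enum.
Qed.

Lemma S_rho A : A \in Sl -> exists g, A = rho g.
Proof.
rewrite inE => /orP [/eqP ->|]; first by exists 1%g; rewrite rho1.
by rewrite mem_filter mem_undup => /andP [_ /mapP [g _ ->]]; exists g.
Qed.

Lemma uniqS : uniq Sl.
Proof. by rewrite /= mem_filter eqxx /= filter_uniq // undup_uniq. Qed.

Lemma permS g : perm_eq [seq A *m rho g | A <- Sl] Sl.
Proof.
apply: uniq_perm; first by rewrite map_inj_uniq ?uniqS // => A A'; exact: rho_lcancel.
  exact: uniqS.
move=> A; apply/idP/idP.
  by move=> /mapP [B /S_rho [h ->] ->]; rewrite -Hrep.1 mem_rho_S.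
move=> /S_rho [h ->]; apply/mapP; exists (rho (h * g^-1)%g); first exact: mem_rho_S.
by rewrite -Hrep.1 -mulgA mulVg mulg1.
Qed.

Definition Pol (phi : CV -> R) (y : CV) : {poly R} :=
  \prod_(A <- Sl) ('X - (phi (A *m y))%:P).

Lemma smooth_coefL (phi : CV -> R) (L : seq MM) k : smoothC phi ->
  smoothC (fun y => (\prod_(A <- L) ('X - (phi (A *m y))%:P))`_k).
Proof.
move=> sp; elim: L k => [|A L IH] k.
  rewrite (_ : (fun y => _) = (fun _ => (k == 0)%:R)); first exact: smoothC_cst.
  by apply/funext => y; rewrite big_nil coef1.
rewrite (_ : (fun y => _) = (fun y => (if k == 0%N then 0 else
     (\prod_(B <- L) ('X - (phi (B *m y))%:P))`_k.-1)
     - phi (A *m y) * (\prod_(B <- L) ('X - (phi (B *m y))%:P))`_k)); last first.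
  by apply/funext => y; rewrite big_cons mulrBl coefB coefXM coefCM.
apply: smoothC_sub; last by apply: smoothC_mul => //; exact: smoothC_compA.
by case: k => [|k] /=; [exact: smoothC_cst | exact: IH].
Qed.

Lemma P_inv phi g y : Pol phi (rho g *m y) = Pol phi y.
Proof.
rewrite /Pol; under eq_bigr do rewrite mulmxA.
rewrite -(big_map (fun A => A *m rho g) xpredT (fun B => 'X - (phi (B *m y))%:P)).
exact: perm_big (permS g).
Qed.

Lemma P_size phi y : size (Pol phi y) = (size Sl).+1.
Proof.
rewrite /Pol -(big_map (fun A => phi (A *m y)) xpredT (fun c => 'X - c%:P)).
by rewrite size_prod_XsubC size_map.
Qed.

Lemma P_root phi y : (Pol phi y).[phi y] = 0.
Proof. by rewrite /Pol /Sl big_cons mul1mx hornerM hornerXsubC subrr mul0r. Qed.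

Lemma P_deriv_root phi y :
  (Pol phi y)^`().[phi y] = \prod_(A <- Tl) (phi y - phi (A *m y)).
Proof.
rewrite /Pol /Sl big_cons mul1mx derivM derivXsubC mul1r hornerD hornerM.
rewrite hornerXsubC subrr mul0r addr0 horner_prod.
by apply: eq_bigr => A _; rewrite hornerXsubC.
Qed.

Lemma key phi y : smoothC phi ->
  (\prod_(A <- Tl) (phi y - phi (A *m y))) * X phi y = 0.
Proof.
move=> sp.
have sc i : smoothC (fun y => (Pol phi y)`_i) by exact: smooth_coefL.
have ic i : X (fun y => (Pol phi y)`_i) = (fun _ => 0).
  by apply: Hinv => // g x; rewrite P_inv.
have F0 : (fun y => \sum_(i < (size Sl).+1) (Pol phi y)`_i * phi y ^+ i) = (fun _ => 0).
  by apply/funext => z; rewrite -horner_coef_wide ?P_root // P_size.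
have := congr1 X F0; rewrite X_zero // X_sum //; last first.
  by move=> i; apply: smoothC_mul => //; exact: smoothC_pow.
move/(congr1 (fun G => G y)) => /= E.
have E2 (i : 'I_(size Sl).+1) : X (fun y => (Pol phi y)`_i * phi y ^+ i) y =
    (Pol phi y)`_i * (i%:R * phi y ^+ i.-1) * X phi y.
  rewrite (@X_mul R n X HX) //; last exact: smoothC_pow.
  rewrite (@X_pow R n X HX) // ic /=; ring.
rewrite -P_deriv_root (@deriv_eval R (Pol phi y) (phi y) (size Sl)); last by rewrite P_size.
by rewrite mulr_suml -[RHS]E; apply: eq_bigr => i _; rewrite E2.
Qed.

Definition psi (c : 'cV[R]_(n + n)) (z : CV) : R :=
  dot (unrealify z - c) (unrealify z - c).

Lemma smooth_psi c : smoothC (psi c).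
Proof.
rewrite /psi; apply: (@smoothC_unr R n (fun w => dot (w - c) (w - c))).
rewrite (_ : (fun w => _) = (fun w : 'cV[R]_(n + n) =>
   \sum_k (w k 0 + - c k 0) * (w k 0 + - c k 0) : R^o)); last first.
  by apply/funext => w; rewrite /dot; apply: eq_bigr => k _; rewrite !mxE.
apply: smooth_sum => k; apply: smooth_mul; apply: smooth_add;
  (exact: smooth_coord || exact: smooth_cst).
Qed.

Lemma psi_self y : psi (unrealify y) y = 0.
Proof.
by rewrite /psi subrr /dot big1 // => k _; rewrite mxE mulr0.
Qed.

Lemma psi_pos y z : z != y -> 0 < psi (unrealify y) z.
Proof.
move=> zy; rewrite /psi lt_def dot_ge0 andbT; apply/eqP => /dot_eq0 /eqP.
rewrite subr_eq0 => /eqP h; move/eqP: zy; apply.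
by rewrite -(realifyK z) h realifyK.
Qed.

Lemma free_zero f y : smoothC f -> (forall A, A \in Tl -> A *m y != y) -> X f y = 0.
Proof.
move=> sf Hfree.
pose ps := psi (unrealify y).
pose b (A : MM) := (f y - f (A *m y)) / ps (A *m y).
pose s1 := 1 + \sum_(A <- Tl) `|b A|.
have sum0 : 0 <= \sum_(A <- Tl) `|b A| by apply: sumr_ge0.
have step s : s1 <= s -> s * X ps y + X f y = 0.
  move=> hs.
  have sphi : smoothC (fun z => s * ps z + f z).
    by apply: smoothC_add => //; apply: smoothC_mul; [exact: smoothC_cst | exact: smooth_psi].
  have := key _ y sphi.
  rewrite (@X_lin R n X HX s ps f (smooth_psi _) sf) /=.
  move/eqP; rewrite mulf_eq0 => /orP [/eqP P0|/eqP //]; exfalso; move: P0; apply/eqP.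
  rewrite prodf_seq_neq0; apply/allP => A AT /=.
  have hp : 0 < ps (A *m y) by apply: psi_pos; exact: Hfree.
  rewrite /ps psi_self mulr0 add0r; apply/eqP => E.
  have sb : s = b A.
    rewrite /b; apply: (@mulIf _ (ps (A *m y))); first by rewrite gt_eqF.
    rewrite divfK ?gt_eqF //; rewrite /ps; move/eqP: E; rewrite subr_eq0 => /eqP ->; ring.
  have := @le_sum_mem R _ Tl (fun A => `|b A|) A (fun _ => normr_ge0 _) AT.
  have := ler_norm (b A); move: hs; rewrite -sb /s1 => ? ? ?; lra.
have e1 := step s1 (lexx _).
have e2 := step (s1 + 1) (ler_wpDr ler01 (lexx _)).
have h0 : X ps y = 0.
  have -> : X ps y = ((s1 + 1) * X ps y + X f y) - (s1 * X ps y + X f y) by ring.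
  by rewrite e1 e2 subrr.
by move: e1; rewrite h0 mulr0 add0r.
Qed.

Lemma reM_fix (A : MM) (w : 'cV[R]_(n + n)) :
  (reM A - 1%:M) *m w != 0 -> A *m realify w != realify w.
Proof.
move=> h; apply/eqP => E; move/eqP: h; apply.
have : reM A *m w = w by rewrite -(unrealifyK (reM A *m w)) reM_realify E unrealifyK.
by rewrite mulmxBl mul1mx => ->; rewrite subrr.
Qed.

Lemma reM_ne1 (A : MM) : A != 1%:M -> reM A - 1%:M != 0.
Proof.
move=> A1; apply: contra A1; rewrite subr_eq0 => /eqP h.
have HA (x : CV) : A *m x = x.
  by rewrite -(realifyK x) -reM_realify h mul1mx.
apply/eqP/matrixP => i j.
have := congr1 (fun v : CV => v i 0) (HA (delta_mx j 0)); rewrite -colE !mxE /=.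
by move=> ->; rewrite eqxx andbT.
Qed.

Theorem main_result f : smoothC f -> X f = (fun _ => 0).
Proof.
move=> sf; apply/funext => y.
pose w0 : ('cV[R]_(n + n) : normedModType R) := unrealify y.
pose G := fun w : ('cV[R]_(n + n) : normedModType R) => (X f (realify w) : R^o).
have cG := @smoothC_cont R n (X f) (@X_smooth R n X HX f sf).
have [u Hu] : exists u : 'cV[R]_(n + n), forall B, B \in [seq reM A - 1%:M | A <- Tl] -> B *m u != 0.
  apply: generic_vec => B /mapP [A].
  by rewrite mem_filter => /andP [A1 _] ->; exact: reM_ne1.
rewrite -(realifyK y) -/w0; apply/eqP; apply: contraT => Gne.
pose e := `|X f (realify w0)|.
have e0 : 0 < e by rewrite normr_gt0.
have Hn : \forall w \near w0, `|G w0 - G w| < e.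
  exact: (@cvgr_dist_lt R R^o _ (nbhs w0) _ G (G w0) (cG w0) e e0).
have [d /= d0 Hd] := (nbhs_ballP _ _).1 Hn.
have ud : 0 < d / (`|u| + 1) by rewrite divr_gt0 // ltr_wpDl.
have [t [/andP [t0 te] Ht]] : exists t : R, 0 < t < d / (`|u| + 1) /\
    forall B, B \in [seq reM A - 1%:M | A <- Tl] -> B *m (w0 + t *: u) != 0.
  by apply: avoid_line => // B HB; rewrite Hu ?orbT.
have free : forall A, A \in Tl -> A *m realify (w0 + t *: u) != realify (w0 + t *: u).
  by move=> A AT; apply: reM_fix; apply: Ht; apply: map_f.
have hz : G (w0 + t *: u) = 0 by rewrite /G free_zero.
have := Hd (w0 + t *: u); rewrite /= hz subr0 /e ltxx; apply.
rewrite -ball_normE /= opprD addrA subrr add0r normrN normrZ gtr0_norm //.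
move: te; rewrite ltr_pdivlMr ?ltr_wpDl // => te.
have : 0 <= `|u| by [].
nra.
Qed.

End Main.

Theorem mainTheorem10 (R : realType) (n : nat) (gT : finGroupType)
    (rho : gT -> 'M[R[i]]_n) (X : ('cV[R[i]]_n -> R) -> ('cV[R[i]]_n -> R)) :
  unitary_rep rho ->
  is_derivation X ->
  (forall f, smoothC f -> gamma_invariant rho f -> X f = (fun _ => 0)) ->
  forall f, smoothC f -> X f = (fun _ => 0).
Proof. move=> Hrep HX Hinv f sf; exact: (@main_result R n gT rho X Hrep HX Hinv f sf). Qed.
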